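(* Let $n\ge2$, $0\le\delta<\frac1n$, let $P^0=[d_1\ \cdots\ d_{n+1}]$ be the canonical uniform simplex, and let $P^\delta=[d_1^\delta\ \cdots\ d^\delta_{n+1}]$ with $d_1^\delta=d_1$ and $d_i^\delta=\alpha(d_i+\delta e_1)$ for $2\le i\le n+1$, where $\alpha=\frac{n}{\sqrt{n^2\delta^2-2n\delta+n^2}}$ and $\beta=\alpha^2\frac{n\delta^2-2\delta-1}{n}$. Let $B$ be the matrix with columns $d_2^\delta,\dots,d_{n+1}^\delta$ (in this order), and for $i\in\{2,\dots,n+1\}$ let $T$ be the matrix whose columns are the vectors $d_1^\delta,\dots,d_{n+1}^\delta$ with $d_i^\delta$ removed, in increasing index order. For a matrix $S$ write $\mathcal G(S)=S^\top S$. Then: (i) for any choice of $i\in\{2,\dots,n+1\}$, $\mathcal G(T)$ is the $n\times n$ matrix with all diagonal entries $1$, all other entries in the first row and first column equal to $\lambda=\alpha\left(-\frac1n+\delta\right)$, and all remaining off-diagonal entries equal to $\beta$; (ii) $\mathcal G(B)^{-1}=\frac{1}{1-\beta}I-\frac{\beta}{(1-\beta)^2\left(1+\frac{\beta n}{1-\beta}\right)}e^{n\times n}$; (iii) $\mathcal G(T)^{-1}=M^{-1}\mathcal G(B)^{-1}M^{-\top}$, where $$M^{-1}=\begin{bmatrix}-\alpha(1-\delta n) & \mathbf 0^{1\times(n-1)}\\ -e^{(n-1)\times1} & I^{(n-1)\times(n-1)}\end{bmatrix}.$$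
   Context: The canonical uniform simplex is the $n\times(n+1)$ matrix $P^0$ defined as follows, with $a_i=\sqrt{\frac{(n-i+1)(n+1)}{n(n-i+2)}}$ for $i=1,\dots,n$: for $1\le j\le n$, column $j$ has entry $-\frac{a_i}{n-i+1}$ in row $i<j$, entry $a_j$ in row $j$, and $0$ in rows $i>j$; column $n+1$ has entry $-\frac{a_i}{n-i+1}$ in every row $i$. $e_1$ is the first standard basis vector; $e^{m\times k}$ is the $m\times k$ all-ones matrix; $M^{-\top}=(M^{-1})^\top$. *)

(* Defs.v *)
From HB Require Import structures.
From mathcomp Require Import all_boot all_order all_algebra.
Set Implicit Arguments. Unset Strict Implicit. Unset Printing Implicit Defensive.
Import Order.TTheory GRing.Theory Num.Theory.
Local Open Scope ring_scope.

(* Indices are 0-based: row i' : 'I_n stands for row i = i'+1 of the paper,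
   column j' : 'I_n.+1 stands for column j = j'+1. *)

Definition simplex_a (R : rcfType) (n : nat) (i' : nat) : R :=
  Num.sqrt (((n - i')%:R * (n.+1)%:R) / (n%:R * (n - i').+1%:R)).

Definition P0 (R : rcfType) (n : nat) : 'M[R]_(n, n.+1) :=
  \matrix_(i < n, j < n.+1)
    if (j < n)%N then
      (if (i < j)%N then - simplex_a R n i / (n - i)%:R
       else if i == j :> nat then simplex_a R n i else 0)
    else - simplex_a R n i / (n - i)%:R.

Definition alpha (R : rcfType) (n : nat) (delta : R) : R :=
  n%:R / Num.sqrt (n%:R ^+ 2 * delta ^+ 2 - 2 * n%:R * delta + n%:R ^+ 2).

Definition beta (R : rcfType) (n : nat) (delta : R) : R :=
  alpha n delta ^+ 2 * ((n%:R * delta ^+ 2 - 2 * delta - 1) / n%:R).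

Definition lambda (R : rcfType) (n : nat) (delta : R) : R :=
  alpha n delta * (- n%:R^-1 + delta).

Definition Pdelta (R : rcfType) (n : nat) (delta : R) : 'M[R]_(n, n.+1) :=
  \matrix_(i < n, j < n.+1)
    if j == ord0 then P0 R n i j
    else alpha n delta * (P0 R n i j + (if i == 0 :> nat then delta else 0)).

Definition Bmat (R : rcfType) (n : nat) (delta : R) : 'M[R]_n :=
  \matrix_(i < n, j < n) Pdelta n delta i (lift ord0 j).

Definition Tmat (R : rcfType) (n : nat) (delta : R) (k : 'I_n.+1) : 'M[R]_n :=
  \matrix_(i < n, j < n) Pdelta n delta i (lift k j).

Definition gram (R : rcfType) (m n : nat) (S : 'M[R]_(m, n)) : 'M[R]_n :=
  S^T *m S.

Definition Minv (R : rcfType) (n : nat) (delta : R) : 'M[R]_n :=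
  \matrix_(i < n, j < n)
    if i == 0 :> nat then
      (if j == 0 :> nat then - alpha n delta * (1 - delta * n%:R) else 0)
    else if j == 0 :> nat then -1 else (i == j)%:R.

(* Main.v *)
Require Import Defs.
From HB Require Import structures.
From mathcomp Require Import all_boot all_order all_algebra.
From mathcomp Require Import ring lra.
Import Order.TTheory GRing.Theory Num.Theory.
Local Open Scope ring_scope.

Section S.
Variable R : rcfType.
Variable n : nat.
Hypothesis n_gt0 : (0 < n)%N.
Local Notation N := (n%:R : R).

Definition fP (r j : nat) : R :=
  if (r < j)%N then - simplex_a R n r / (n - r)%:R
  else if r == j then simplex_a R n r else 0.

Lemma P0E (i : 'I_n) (j : 'I_n.+1) : P0 R n i j = fP i j.
Proof.
rewrite mxE /fP; case: ifP => // /negbT; rewrite -leqNgt => hj.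
by rewrite (leq_trans (ltn_ord i) hj).
Qed.

Lemma N_gt0 : 0 < N. Proof. by rewrite ltr0n. Qed.

Lemma a_sq r : (r < n)%N -> simplex_a R n r ^+ 2 =
  ((N - r%:R) * (N + 1)) / (N * (N - r%:R + 1)).
Proof.
move=> hr; rewrite /simplex_a sqr_sqrtr; last first.
  by apply: divr_ge0; apply: mulr_ge0; apply: ler0n.
by rewrite -!natr1 natrB // ?(ltnW hr).
Qed.

Lemma a0 : simplex_a R n 0 = 1.
Proof.
rewrite /simplex_a subn0 divff ?sqrtr1 //.
by rewrite mulf_neq0 // pnatr_eq0 // -lt0n.
Qed.

Lemma Ssum j : (j <= n)%N ->
  \sum_(0 <= r < j) (simplex_a R n r / (n - r)%:R) ^+ 2 =
  (N + 1) / (N * (N - j%:R + 1)) - 1 / N.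
Proof.
have hN := N_gt0.
elim: j => [|j IH] hj.
  rewrite big_geq //; field.
  apply/andP; split; apply: lt0r_neq0; lra.
rewrite big_nat_recr //= IH ?(ltnW hj) // expr_div_n a_sq // natrB ?(ltnW hj) //.
have hjn : j.+1%:R <= N by rewrite ler_nat.
rewrite -natr1 in hjn *.
field.
rewrite !lt0r_neq0 //=; lra.
Qed.

Lemma dot_le j k : (j <= k)%N -> (k <= n)%N ->
  \sum_(r < n) fP r j * fP r k = if j == k then 1 else - 1 / N.
Proof.
move=> hjk hkn; have hjn := leq_trans hjk hkn; have hN := N_gt0.
rewrite -(big_mkord xpredT (fun r => fP r j * fP r k)).
rewrite (big_cat_nat (leq0n j) hjn) /=.
rewrite (eq_big_nat _ _ (F2 := fun r => (simplex_a R n r / (n - r)%:R) ^+ 2)); last first.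
  move=> r /andP[_ hr]; rewrite /fP hr (leq_trans hr hjk) expr2; ring.
rewrite Ssum //.
case: (ltnP j n) => hj; last first.
  have ej : j = n by apply/eqP; rewrite eqn_leq hjn hj.
  have ek : k = n by apply/eqP; rewrite eqn_leq hkn -ej hjk.
  subst; rewrite eqxx big_geq // addr0 subrr add0r; field.
  by rewrite lt0r_neq0.
rewrite big_ltn //.
rewrite (eq_big_nat _ _ (F2 := fun r => 0)); last first.
  move=> r /andP[hr _]; rewrite /fP ltnNge (ltnW hr) /= (gtn_eqF hr) mul0r //.
rewrite big1 // addr0 /fP ltnn eqxx.
have hjR : j%:R + 1 <= N by rewrite natr1 ler_nat.
case: (ltngtP j k) hjk => [hlt|//|ejk] _.
  rewrite mulrA mulrN -expr2 a_sq // natrB ?(ltnW hj) //.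
  field; rewrite !lt0r_neq0 //=; lra.
rewrite -expr2 a_sq //; field; rewrite !lt0r_neq0 //=; lra.
Qed.

Lemma dot j k : (j <= n)%N -> (k <= n)%N ->
  \sum_(r < n) fP r j * fP r k = if j == k then 1 else - 1 / N.
Proof.
move=> hj hk; case: (leqP j k) => h; first exact: dot_le.
rewrite eq_sym -dot_le ?(ltnW h) //; apply: eq_bigr => r _; exact: mulrC.
Qed.

Variable delta : R.
Local Notation D := (N ^+ 2 * delta ^+ 2 - 2 * N * delta + N ^+ 2).
Local Notation al := (alpha n delta).

Lemma D_gt0 : (2 <= n)%N -> 0 < D.
Proof.
move=> h2; have : 2%:R <= N by rewrite ler_nat.
move=> h; have h1 := sqr_ge0 (N * delta - 1).
have h3 : 4 <= N ^+ 2 by rewrite expr2; nra.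
nra.
Qed.

Lemma alpha2 : (2 <= n)%N -> al ^+ 2 = N ^+ 2 / D.
Proof.
move=> h2; rewrite /alpha expr_div_n sqr_sqrtr // ltW // D_gt0 //.
Qed.

Definition cf (j : nat) : R := if j == 0%N then 1 else al.
Definition ee (j : nat) : R := if j == 0%N then 0 else delta.

Lemma PdE (i : 'I_n) (j : 'I_n.+1) :
  Pdelta n delta i j = cf j * (fP i j + if i == 0%N :> nat then ee j else 0).
Proof.
rewrite mxE P0E /cf /ee.
have -> : (j == ord0) = (j == 0%N :> nat) by [].
case: eqP => _; first by case: eqP; rewrite mul1r addr0.
by [].
Qed.

Lemma ind_sum (g : nat -> R) :
  \sum_(r < n) (if r == 0%N :> nat then g r else 0) = g 0%N.
Proof.
rewrite -(big_mkord xpredT (fun r => if r == 0%N then g r else 0)) big_ltn //.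
rewrite eqxx big_nat_cond big1 ?addr0 // => r /andP[/andP[hr _] _].
by rewrite gtn_eqF.
Qed.

Lemma fP00 : fP 0 0 = 1.
Proof. by rewrite /fP ltnn eqxx a0. Qed.

Lemma fP0j j : (0 < j)%N -> fP 0 j = - 1 / N.
Proof. by move=> h; rewrite /fP h a0 subn0. Qed.

Definition Gf (j k : nat) : R :=
  if j == k then 1 else if (j == 0%N) || (k == 0%N) then lambda n delta
  else beta n delta.

Lemma gram_full (h2 : (2 <= n)%N) (j k : 'I_n.+1) :
  \sum_(r < n) Pdelta n delta r j * Pdelta n delta r k = Gf j k.
Proof.
have hN := N_gt0.
have hj : (j <= n)%N by rewrite -ltnS. 
have hk : (k <= n)%N by rewrite -ltnS. 
rewrite (eq_bigr (fun r : 'I_n => cf j * cf k * (fP r j * fP r k +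
   (if r == 0%N :> nat then ee j * fP r k + ee k * fP r j + ee j * ee k else 0))));
  last by move=> r _; rewrite !PdE; case: eqP => _; ring.
rewrite -mulr_sumr big_split /=.
rewrite (ind_sum (fun r => ee j * fP r k + ee k * fP r j + ee j * ee k)) dot //.
rewrite /Gf /cf /ee.
case: (posnP j) => [j0|jp]; case: (posnP k) => [k0|kp].
- by rewrite j0 k0 eqxx fP00; ring.
- rewrite j0 fP00 /=.
  have -> : (0 == k :> nat) = false by rewrite eq_sym gtn_eqF.
  rewrite fP0j // /lambda; field; rewrite lt0r_neq0 //.
- rewrite k0 fP00 (gtn_eqF jp) /=.
  rewrite fP0j // /lambda; field; rewrite lt0r_neq0 //.
- rewrite !fP0j //=.
  have hD := D_gt0 h2.
  case: eqP => _.
    rewrite -expr2 alpha2 //; field.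
    by rewrite exprMn !lt0r_neq0.
  rewrite /beta -expr2; field; rewrite !lt0r_neq0 //.
Qed.
Lemma gramT (h2 : (2 <= n)%N) (k : 'I_n.+1) :
  gram (Tmat delta k) = \matrix_(i < n, j < n) Gf (lift k i) (lift k j).
Proof.
apply/matrixP => i j; rewrite !mxE -gram_full //; apply: eq_bigr => r _.
by rewrite !mxE.
Qed.

Lemma beta1 (h2 : (2 <= n)%N) : 1 - beta n delta = N * (N + 1) / D.
Proof.
have hD := D_gt0 h2; have hN := N_gt0.
rewrite /beta alpha2 //; field.
by rewrite ?exprMn !lt0r_neq0.
Qed.

Lemma beta2 (h2 : (2 <= n)%N) :
  1 + (N - 1) * beta n delta = N * (1 - N * delta) ^+ 2 / D.
Proof.
have hD := D_gt0 h2; have hN := N_gt0.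
rewrite /beta alpha2 //; field.
by rewrite ?exprMn !lt0r_neq0.
Qed.

Lemma cl_id (h2 : (2 <= n)%N) :
  (- al * (1 - delta * N)) * lambda n delta = 1 + (N - 1) * beta n delta.
Proof.
have hD := D_gt0 h2; have hN := N_gt0.
rewrite /lambda /beta.
have -> : - al * (1 - delta * N) * (al * (- N^-1 + delta)) =
  al ^+ 2 * ((1 - delta * N) ^+ 2 / N).
  by field; rewrite ?exprMn !lt0r_neq0.
rewrite alpha2 //; field.
by rewrite ?exprMn !lt0r_neq0.
Qed.

Lemma cc_id (h2 : (2 <= n)%N) :
  (- al * (1 - delta * N)) * (- al * (1 - delta * N)) =
  1 + (N - 1) * (1 + N * beta n delta).
Proof.
have hD := D_gt0 h2; have hN := N_gt0.
have -> : (- al * (1 - delta * N)) * (- al * (1 - delta * N)) =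
  al ^+ 2 * (1 - delta * N) ^+ 2 by ring.
rewrite /beta alpha2 //; field.
by rewrite ?exprMn !lt0r_neq0.
Qed.

End S.

Lemma inv_eq (R : comUnitRingType) m (A B : 'M[R]_m) :
  A *m B = 1%:M -> A \in unitmx /\ invmx A = B.
Proof.
move=> h; have [uA _] := mulmx1_unit h; split => //.
by rewrite -(mulKmx uA B) h mulmx1.
Qed.

Section T.
Variable R : rcfType.

Definition GTf n (l b : R) : 'M[R]_n := \matrix_(i < n, j < n)
  (if i == j then 1 else if (i == 0 :> nat) || (j == 0 :> nat) then l else b).
Definition GBf n (b : R) : 'M[R]_n := \matrix_(i < n, j < n) (if i == j then 1 else b).

Lemma JJ n : (const_mx 1 : 'M[R]_n) *m (const_mx 1 : 'M[R]_n) = n%:R *: (const_mx 1 : 'M[R]_n).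
Proof.
apply/matrixP => i j; rewrite !mxE (eq_bigr (fun _ => 1)) => [|l _]; last by rewrite !mxE mulr1.
by rewrite sumr_const card_ord mulr1.
Qed.

Lemma inv_lem n (b : R) : 1 - b != 0 -> 1 + b * n%:R / (1 - b) != 0 ->
  GBf n b *m ((1 - b)^-1%:M - (b / ((1 - b) ^+ 2 * (1 + b * n%:R / (1 - b)))) *: const_mx 1)
  = 1%:M.
Proof.
move=> h1 h2.
have -> : GBf n b = (1 - b)%:M + b *: const_mx 1.
  apply/matrixP => i j; rewrite !mxE; case: eqP => _ /=; rewrite ?mulr1n ?mulr0n; ring.
rewrite mulmxDl !mulmxBr mul_scalar_mx mul_mx_scalar -!scalemxAl -!scalemxAr JJ ?mul_scalar_mx.
apply/matrixP => i j; rewrite !mxE; case: eqP => _ /=; rewrite ?mulr1n ?mulr0n.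
  field; rewrite h1 /=.
  by move: h2; rewrite -{1}(divff h1) -mulrDl mulf_eq0 negb_or invr_eq0 h1 andbT.
field; rewrite h1 /=.
by move: h2; rewrite -{1}(divff h1) -mulrDl mulf_eq0 negb_or invr_eq0 h1 andbT.
Qed.
End T.
Arguments GTf {R} n l b.
Arguments GBf {R} n b.

Section K.
Variable R : rcfType.
Variable m : nat.
Variable delta : R.
Local Notation Mi := (Minv m.+1 delta).
Local Notation c := (- alpha m.+1 delta * (1 - delta * m.+1%:R)).

Lemma Minv_r (v : 'I_m.+1 -> R) j :
  \sum_b v b * Mi b j =
  if j == 0 :> nat then c * v ord0 - \sum_(b < m) v (lift ord0 b) else v j.
Proof.
case: eqP => hj.
  rewrite big_ord_recl mxE /= hj eqxx mulrC -sumrN; congr (_ + _).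
  by apply: eq_bigr => b _; rewrite mxE /= hj eqxx mulrN1.
rewrite (bigD1 j) //= mxE (negbTE (introN eqP hj)) eqxx mulr1 big1 ?addr0 //.
move=> b hb; rewrite mxE; case: eqP => _; first by rewrite (negbTE (introN eqP hj)) mulr0.
by rewrite (negbTE (introN eqP hj)) (negbTE hb) mulr0.
Qed.

Lemma Minv_l (w : 'I_m.+1 -> R) i :
  \sum_a Mi a i * w a =
  if i == 0 :> nat then c * w ord0 - \sum_(a < m) w (lift ord0 a) else w i.
Proof.
rewrite -Minv_r; apply: eq_bigr => a _; exact: mulrC.
Qed.

Lemma sum_delta (b0 : 'I_m) (x y : R) :
  \sum_(a < m) (if a == b0 then x else y) = y * m%:R + (x - y).
Proof.
rewrite (eq_bigr (fun a => y + (if a == b0 then x - y else 0))); last first.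
  by move=> a _; case: eqP => _; ring.
rewrite big_split /= sumr_const card_ord -big_mkcond big_pred1_eq mulr_natr //.
Qed.

Lemma key (l b : R) :
  c * l = 1 + m%:R * b ->
  c * c = 1 + m%:R * (1 + m.+1%:R * b) ->
  Mi^T *m GTf m.+1 l b *m Mi = GBf m.+1 b.
Proof.
move=> e1 e2; apply/matrixP => i j.
rewrite mxE (Minv_r (fun k => (Mi^T *m GTf m.+1 l b) i k) j).
have VE : forall k, (Mi^T *m GTf m.+1 l b) i k =
   if i == 0 :> nat then c * GTf m.+1 l b ord0 k - \sum_(a < m) GTf m.+1 l b (lift ord0 a) k
   else GTf m.+1 l b i k.
  move=> k; rewrite mxE -(Minv_l (fun a => GTf m.+1 l b a k) i); apply: eq_bigr => a _; rewrite mxE //.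
rewrite !VE.
have GE : forall a b', GTf m.+1 l b (lift ord0 a) (lift ord0 b') = if a == b' then 1 else b.
  by move=> a b'; rewrite mxE (inj_eq (@lift_inj _ ord0)).
have G0 : forall a, GTf m.+1 l b ord0 (lift ord0 a) = l by move=> a; rewrite mxE.
have G0' : forall a, GTf m.+1 l b (lift ord0 a) ord0 = l by move=> a; rewrite mxE.
have G00 : GTf m.+1 l b ord0 ord0 = 1 by rewrite mxE.
move: VE; case: (unliftP ord0 i) => [i'|] ->; case: (unliftP ord0 j) => [j'|] -> /= VE.
- by rewrite GE !mxE (inj_eq (@lift_inj _ ord0)).
- rewrite G0'; under eq_bigr => b' _ do rewrite VE GE eq_sym.
  rewrite sum_delta /GBf mxE eq_sym (negbTE (neq_lift _ _)) e1; ring.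
- rewrite G0; under eq_bigr => a _ do rewrite GE.
  rewrite sum_delta /GBf mxE (negbTE (neq_lift _ _)) e1; ring.
- rewrite G00; under eq_bigr => a _ do rewrite G0'.
  rewrite sumr_const card_ord.
  under eq_bigr => b' _ do rewrite VE G0.
  rewrite (eq_bigr (fun _ => b)); last first.
    by move=> b' _; under eq_bigr => a _ do rewrite GE; rewrite sum_delta e1; ring.
  rewrite sumr_const card_ord /GBf mxE eqxx.
  set C := (- alpha m.+1 delta * (1 - delta * m.+1%:R)) in e1 e2 *.
  rewrite mulrBr mulr1 mulrnAr e2 e1; ring.
Qed.
End K.

Theorem lemma10 (R : rcfType) (n : nat) (delta : R) :
  (2 <= n)%N -> 0 <= delta -> delta < n%:R^-1 ->
  (* (i) *)
  (forall k : 'I_n.+1, k != ord0 ->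
     gram (Tmat delta k) =
     \matrix_(i < n, j < n)
        (if i == j then 1
         else if (i == 0 :> nat) || (j == 0 :> nat) then lambda n delta
         else beta n delta)) /\
  (* (ii) *)
  (gram (Bmat n delta) \in unitmx /\
   invmx (gram (Bmat n delta)) =
     (1 - beta n delta)^-1%:M
     - (beta n delta / ((1 - beta n delta) ^+ 2 *
           (1 + beta n delta * n%:R / (1 - beta n delta))))
       *: const_mx 1) /\
  (* (iii) *)
  (forall k : 'I_n.+1, k != ord0 ->
     gram (Tmat delta k) \in unitmx /\
     invmx (gram (Tmat delta k)) =
       Minv n delta *m invmx (gram (Bmat n delta)) *m (Minv n delta)^T).
Proof.
case: n => [//|m] h2 hd0 hd1.
have hm0 : (0 < m.+1)%N by [].
have hN : 0 < m.+1%:R :> R by rewrite ltr0n.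
have E1 : forall (k : 'I_m.+2) (i j : 'I_m.+1),
    (lift k i == lift k j :> nat) = (i == j).
  by move=> k i j; rewrite val_eqE (inj_eq (@lift_inj _ k)).
have GT : forall k : 'I_m.+2, k != ord0 ->
    gram (Tmat delta k) = GTf m.+1 (lambda m.+1 delta) (beta m.+1 delta).
  move=> k hk; have kp : (0 < k)%N by rewrite lt0n.
  have E0 : forall i : 'I_m.+1, (lift k i == 0%N :> nat) = (i == 0%N :> nat).
    move=> i; rewrite /= /bump; case: (leqP k i) => h.
      rewrite add1n; symmetry; apply/negbTE; rewrite -lt0n; exact: leq_trans kp h.
    by rewrite add0n.
  rewrite (@gramT _ _ hm0 delta h2); apply/matrixP => i j; rewrite !mxE /Gf E1 !E0 //.
have GB : gram (Bmat m.+1 delta) = GBf m.+1 (beta m.+1 delta).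
  rewrite (_ : Bmat m.+1 delta = Tmat delta ord0) // (@gramT _ _ hm0 delta h2).
  by apply/matrixP => i j; rewrite !mxE /Gf E1.
have hD := @D_gt0 _ _ delta h2.
have hb1 : 1 - beta m.+1 delta != 0.
  rewrite (@beta1 _ _ hm0 delta h2); apply: lt0r_neq0; apply: divr_gt0 => //.
  by apply: mulr_gt0 => //; rewrite ltr_wpDr.
have hNd : m.+1%:R * delta < 1.
  by rewrite -[X in _ < X](mulfV (lt0r_neq0 hN)) ltr_pM2l.
have hb2 : 1 + beta m.+1 delta * m.+1%:R / (1 - beta m.+1 delta) != 0.
  rewrite (_ : 1 + beta m.+1 delta * m.+1%:R / (1 - beta m.+1 delta) =
     (1 + (m.+1%:R - 1) * beta m.+1 delta) / (1 - beta m.+1 delta)); last first.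
    by field.
  rewrite (@beta2 _ _ hm0 delta h2); apply: mulf_neq0; last by rewrite invr_eq0.
  apply: lt0r_neq0; apply: divr_gt0 => //; apply: mulr_gt0 => //.
  apply: exprn_gt0; lra.
have [uB iB] := @inv_eq _ _ _ _ (@inv_lem _ _ _ hb1 hb2).
split; first by move=> k hk; rewrite GT.
split; first by rewrite GB.
move=> k hk; rewrite GT // GB.
have NM : m.+1%:R - 1 = m%:R :> R by rewrite -natr1 addrK.
have e1 := @cl_id _ _ hm0 delta h2; have e2 := @cc_id _ _ hm0 delta h2.
rewrite NM in e1 e2.
have K := @key _ _ _ _ _ e1 e2.
have X : (Minv m.+1 delta)^T *m (GTf m.+1 (lambda m.+1 delta) (beta m.+1 delta)
    *m Minv m.+1 delta *m invmx (GBf m.+1 (beta m.+1 delta))) = 1%:M.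
  by rewrite !mulmxA K mulmxV.
have Y := mulmx1C X; rewrite -!mulmxA in Y.
have [uT iT] := @inv_eq _ _ _ _ Y; split => //; by rewrite iT !mulmxA.
Qed.
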